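(* Let $\alpha>0$ and $\kappa_l=l^{-\alpha}$. For even $N\ge4$ let $\gamma_\alpha(N)=\sum_{n=0}^{N-1}|f_N(k_n)|$ with $f_N(k)=2\sum_{l=1}^{N/2-1}l^{-\alpha}\sin(kl)+(N/2)^{-\alpha}$ and $k_n=(2n+1)\pi/N$. Then there exist constants $0<c\le C$ and $N_0$ (depending on $\alpha$) such that $c\,N\le\gamma_\alpha(N)\le C\,N$ for all even $N\ge N_0$. Consequently $I_0(\Delta)=[\gamma_\alpha(N)/2]^2T^2$ obeys Heisenberg scaling $\asymp T^2N^2$ for every $\alpha>0$; for power-law decay, super-Heisenberg scaling occurs only at $\alpha=0$.
   Context: $T>0$ is the probe time; $I_0(\Delta)=[\gamma_\alpha(N)/2]^2T^2$ is the optimally controlled quantum Fisher information for estimating the pairing strength $\Delta$ in the long-range Kitaev chain with decay law $\kappa_l$. *)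

(* Defs.v *)
From Stdlib Require Import Reals Lra Lia.
Open Scope R_scope.

Fixpoint sumR (f : nat -> R) (n : nat) : R :=
  match n with
  | O => 0
  | S m => sumR f m + f m
  end.

Definition kappa (alpha : R) (l : nat) : R := Rpower (INR l) (- alpha).

Definition fN (alpha : R) (N : nat) (k : R) : R :=
  2 * sumR (fun j => kappa alpha (S j) * sin (k * INR (S j))) (N / 2 - 1)
  + kappa alpha (N / 2).

Definition kn (N n : nat) : R := (2 * INR n + 1) * PI / INR N.

Definition gammaA (alpha : R) (N : nat) : R :=
  sumR (fun n => Rabs (fN alpha N (kn N n))) N.

Definition I0 (alpha : R) (N : nat) (T : R) : R :=
  (gammaA alpha N / 2) ^ 2 * T ^ 2.

(* Main.v *)
Require Import Defs.
From Stdlib Require Import Reals Lra Lia.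
Open Scope R_scope.

Lemma sumR_ext f g n : (forall i, (i < n)%nat -> f i = g i) -> sumR f n = sumR g n.
Proof. induction n; simpl; intros H; auto. rewrite IHn by (intros; apply H; lia). rewrite H by lia; auto. Qed.

Lemma sumR_le f g n : (forall i, (i < n)%nat -> f i <= g i) -> sumR f n <= sumR g n.
Proof. induction n; simpl; intros H; [lra|]. assert (f n <= g n) by (apply H; lia).
 assert (sumR f n <= sumR g n) by (apply IHn; intros; apply H; lia). lra. Qed.

Lemma sumR_plus f g n : sumR (fun i => f i + g i) n = sumR f n + sumR g n.
Proof. induction n; simpl; [lra|]. rewrite IHn; lra. Qed.

Lemma sumR_scal c f n : sumR (fun i => c * f i) n = c * sumR f n.
Proof. induction n; simpl; [lra|]. rewrite IHn; lra. Qed.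

Lemma sumR_const c n : sumR (fun _ => c) n = INR n * c.
Proof. induction n; simpl sumR; [simpl; lra|]. rewrite IHn, S_INR; lra. Qed.

Lemma sumR_abs f n : Rabs (sumR f n) <= sumR (fun i => Rabs (f i)) n.
Proof. induction n; simpl; [rewrite Rabs_R0; lra|].
 eapply Rle_trans; [apply Rabs_triang|]. lra. Qed.

Lemma sumR_nonneg f n : (forall i, (i < n)%nat -> 0 <= f i) -> 0 <= sumR f n.
Proof. intros H. replace 0 with (sumR (fun _ => 0) n).
 apply sumR_le; auto. rewrite sumR_const; lra. Qed.

Lemma sumR_tele (phi : nat -> R) n : sumR (fun i => phi (S i) - phi i) n = phi n - phi O.
Proof. induction n; simpl; [lra|]. rewrite IHn; lra. Qed.

Lemma sumR_tele_le h (phi : nat -> R) n :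
  (forall i, (i < n)%nat -> h i <= phi (S i) - phi i) -> sumR h n <= phi n - phi O.
Proof. intros H. rewrite <- sumR_tele. apply sumR_le; auto. Qed.

Lemma sumR_swap (g : nat -> nat -> R) N L :
  sumR (fun n => sumR (fun l => g n l) L) N = sumR (fun l => sumR (fun n => g n l) N) L.
Proof. induction N; simpl.
 - rewrite sumR_const; simpl; lra.
 - rewrite IHN, <- sumR_plus. reflexivity. Qed.

Lemma sumR_split f a b : sumR f (a + b) = sumR f a + sumR (fun i => f (a + i)%nat) b.
Proof. induction b; simpl.
 - rewrite Nat.add_0_r; lra.
 - rewrite Nat.add_succ_r; simpl. rewrite IHb; lra. Qed.

Lemma sumR_prefix f K N : (K <= N)%nat -> (forall i, (i < N)%nat -> 0 <= f i) -> sumR f K <= sumR f N.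
Proof. intros HK H. replace N with (K + (N - K))%nat by lia. rewrite sumR_split.
 assert (0 <= sumR (fun i => f (K + i)%nat) (N - K)) by (apply sumR_nonneg; intros; apply H; lia). lra. Qed.

Lemma abel (a U : nat -> R) L : U O = 0 ->
  sumR (fun l => a (S l) * (U (S l) - U l)) L = a L * U L + sumR (fun l => (a l - a (S l)) * U l) L.
Proof. intros H0. induction L; simpl.
 - rewrite H0; lra.
 - rewrite IHL. ring. Qed.

Lemma sumR_S f n : sumR f (S n) = sumR f n + f n.
Proof. reflexivity. Qed.
Lemma sumR_O f : sumR f O = 0.
Proof. reflexivity. Qed.

Definition Ssin k l := sumR (fun j => sin (k * INR (S j))) l.

Lemma Ssin_closed k l : 2 * sin (k/2) * Ssin k l = cos (k/2) - cos ((INR l + 1/2) * k).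
Proof. induction l; unfold Ssin in *; rewrite ?sumR_S, ?sumR_O.
 - simpl INR. replace ((0 + 1/2) * k) with (k/2) by lra. lra.
 - rewrite Rmult_plus_distr_l, IHl.
   replace ((INR l + 1/2) * k) with (k * INR (S l) - k/2) by (rewrite S_INR; lra).
   replace ((INR (S l) + 1/2) * k) with (k * INR (S l) + k/2) by (rewrite S_INR; lra).
   rewrite cos_minus, cos_plus. ring. Qed.

Lemma Ssin_le_l k l : Rabs (Ssin k l) <= INR l.
Proof. induction l; unfold Ssin in *; rewrite ?sumR_S, ?sumR_O.
 - rewrite Rabs_R0; simpl; lra.
 - pose proof (SIN_bound (k * INR (S l))). assert (Rabs (sin (k * INR (S l))) <= 1) by (apply Rabs_le; lra).
   eapply Rle_trans; [apply Rabs_triang|]. pose proof (S_INR l). lra. Qed.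

Lemma Ssin_le_s k l : sin (k/2) <> 0 -> Rabs (Ssin k l) <= / Rabs (sin (k/2)).
Proof. intros H. pose proof (Ssin_closed k l).
 assert (Hp : 0 < Rabs (sin (k/2))) by (apply Rabs_pos_lt; auto).
 assert (Rabs (2 * sin (k/2) * Ssin k l) <= 2).
 { rewrite H0. eapply Rle_trans; [apply Rabs_triang|]. rewrite Rabs_Ropp.
   pose proof (COS_bound (k/2)). pose proof (COS_bound ((INR l + 1/2) * k)).
   assert (Rabs (cos (k/2)) <= 1) by (apply Rabs_le; lra).
   assert (Rabs (cos ((INR l + 1/2) * k)) <= 1) by (apply Rabs_le; lra). lra. }
 rewrite !Rabs_mult in H1. rewrite Rabs_right in H1 by lra.
 apply (Rmult_le_reg_l (Rabs (sin (k/2)))); auto. rewrite Rinv_r by lra. lra. Qed.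

Lemma sin_lb3 y : 0 < y -> y <= PI/2 -> y/3 <= sin y.
Proof. intros H1 H2. pose proof PI_4. pose proof PI2_3_2.
 destruct (Rle_dec y 1).
 - destruct (sin_bound y 0) as [Hb _]; try lra.
   replace (sin_approx y (2*0+1)) with (y - y*y*y/6) in Hb
     by (unfold sin_approx, sin_term; simpl; unfold Rdiv; simpl; field).
   nra.
 - assert (sin 1 <= sin y) by (apply sin_incr_1; lra).
   destruct (sin_bound 1 0) as [Hb _]; try lra.
   replace (sin_approx 1 (2*0+1)) with (1 - 1*1*1/6) in Hb
     by (unfold sin_approx, sin_term; simpl; unfold Rdiv; simpl; field).
   lra. Qed.

Lemma sin_2jPI j : sin (2 * INR j * PI) = 0.
Proof. pose proof (sin_period 0 j). rewrite sin_0, Rplus_0_l in H. auto. Qed.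

Lemma kn_pos N n : (0 < N)%nat -> 0 < kn N n.
Proof. intros. unfold kn. pose proof PI_RGT_0. pose proof (pos_INR n).
 assert (0 < INR N) by (apply lt_0_INR; auto). apply Rdiv_lt_0_compat; nra. Qed.

Lemma sum_cos_zero N j : (1 <= j)%nat -> (j < N)%nat ->
  sumR (fun n => cos (INR j * kn N n)) N = 0.
Proof. intros Hj HN.
 assert (HNp : 0 < INR N) by (apply lt_0_INR; lia).
 set (th := INR j * PI / INR N).
 assert (Hth : 0 < sin th).
 { apply sin_gt_0; unfold th. pose proof PI_RGT_0. assert (1 <= INR j) by (apply (le_INR 1); auto).
   apply Rdiv_lt_0_compat; nra.
   assert (INR j < INR N) by (apply lt_INR; auto). pose proof PI_RGT_0.
   apply (Rmult_lt_reg_r (INR N)); auto. unfold Rdiv. rewrite Rmult_assoc, Rinv_l by lra. nra. }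
 assert (H : 2 * sin th * sumR (fun n => cos (INR j * kn N n)) N = 0).
 { rewrite <- sumR_scal.
   rewrite (sumR_ext _ (fun n => sin (2 * INR (S n) * th) - sin (2 * INR n * th))).
   - rewrite (sumR_tele (fun n => sin (2 * INR n * th))). simpl INR. unfold th.
     replace (2 * INR N * (INR j * PI / INR N)) with (2 * INR j * PI) by (field; lra).
     rewrite sin_2jPI. replace (2*0*(INR j * PI / INR N)) with 0 by ring. rewrite sin_0. ring.
   - intros i _. rewrite S_INR.
     replace (2 * (INR i + 1) * th) with ((2 * INR i + 1) * th + th) by ring.
     replace (2 * INR i * th) with ((2 * INR i + 1) * th - th) by ring.
     rewrite sin_plus, sin_minus.
     replace (INR j * kn N i) with ((2 * INR i + 1) * th) by (unfold kn, th; field; lra). ring. }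
 apply Rmult_integral in H. destruct H; lra. Qed.

Lemma sum_sin_zero N : (2 <= N)%nat -> sumR (fun n => sin (kn N n)) N = 0.
Proof. intros HN.
 assert (HNp : 0 < INR N) by (apply lt_0_INR; lia).
 set (th := PI / INR N).
 assert (Hth : 0 < sin th).
 { apply sin_gt_0; unfold th. pose proof PI_RGT_0. apply Rdiv_lt_0_compat; lra.
   assert (2 <= INR N) by (apply (le_INR 2); auto). pose proof PI_RGT_0.
   apply (Rmult_lt_reg_r (INR N)); auto. unfold Rdiv. rewrite Rmult_assoc, Rinv_l by lra. nra. }
 assert (H : 2 * sin th * sumR (fun n => sin (kn N n)) N = 0).
 { rewrite <- sumR_scal.
   rewrite (sumR_ext _ (fun n => (- cos (2 * INR (S n) * th)) - (- cos (2 * INR n * th)))).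
   - rewrite (sumR_tele (fun n => - cos (2 * INR n * th))). simpl INR. unfold th.
     replace (2 * INR N * (PI / INR N)) with (2 * PI) by (field; lra).
     rewrite cos_2PI. replace (2*0*(PI / INR N)) with 0 by ring. rewrite cos_0. ring.
   - intros i _. rewrite S_INR.
     replace (2 * (INR i + 1) * th) with ((2 * INR i + 1) * th + th) by ring.
     replace (2 * INR i * th) with ((2 * INR i + 1) * th - th) by ring.
     rewrite cos_plus, cos_minus.
     replace (kn N i) with ((2 * INR i + 1) * th) by (unfold kn, th; field; lra). ring. }
 apply Rmult_integral in H. destruct H; lra. Qed.

Lemma orth_1 N : (3 <= N)%nat -> sumR (fun n => sin (kn N n * INR 1) * sin (kn N n)) N = INR N / 2.
Proof. intros HN.
 rewrite (sumR_ext _ (fun n => / 2 + (- / 2) * cos (INR 2 * kn N n))).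
 - rewrite sumR_plus, sumR_scal, sum_cos_zero by lia. rewrite sumR_const. lra.
 - intros i _. replace (INR 2 * kn N i) with (kn N i + kn N i) by (simpl; ring).
   rewrite cos_plus, Rmult_1_r. pose proof (sin2_cos2 (kn N i)). unfold Rsqr in H. nra. Qed.

Lemma orth_l N l : (2 <= l)%nat -> (l + 1 < N)%nat ->
  sumR (fun n => sin (kn N n * INR l) * sin (kn N n)) N = 0.
Proof. intros Hl HN.
 rewrite (sumR_ext _ (fun n => / 2 * cos (INR (l - 1) * kn N n) + (- / 2) * cos (INR (l + 1) * kn N n))).
 - rewrite sumR_plus, !sumR_scal, !sum_cos_zero by lia. ring.
 - intros i _. rewrite minus_INR by lia. rewrite plus_INR. simpl INR.
   replace ((INR l - 1) * kn N i) with (kn N i * INR l - kn N i) by ring.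
   replace ((INR l + 1) * kn N i) with (kn N i * INR l + kn N i) by ring.
   rewrite cos_minus, cos_plus. lra. Qed.

Lemma kappa_1 a : kappa a 1 = 1.
Proof. unfold kappa, Rpower. simpl INR. rewrite ln_1, Rmult_0_r, exp_0. auto. Qed.

Lemma div2M M : ((2 * M) / 2 = M)%nat.
Proof. rewrite Nat.mul_comm. apply Nat.div_mul. lia. Qed.

Lemma gamma_lb a M : (2 <= M)%nat -> INR (2 * M) <= gammaA a (2 * M).
Proof. intros HM. set (N := (2 * M)%nat).
 assert (HN : (4 <= N)%nat) by (unfold N; lia).
 apply Rle_trans with (sumR (fun n => fN a N (kn N n) * sin (kn N n)) N).
 2:{ unfold gammaA. apply sumR_le. intros i _.
     pose proof (SIN_bound (kn N i)). eapply Rle_trans; [apply Rle_abs|].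
     rewrite Rabs_mult. pose proof (Rabs_pos (fN a N (kn N i))).
     assert (Rabs (sin (kn N i)) <= 1) by (apply Rabs_le; lra). nra. }
 unfold fN. assert (HN2 : (N / 2 = M)%nat) by apply div2M. rewrite HN2.
 destruct M as [|[|M']]; try lia. replace (S (S M') - 1)%nat with (1 + M')%nat by lia.
 rewrite (sumR_ext _ (fun n => 2 * sumR (fun j => kappa a (S j) * (sin (kn N n * INR (S j)) * sin (kn N n))) (1 + M')
     + kappa a (S (S M')) * sin (kn N n))).
 2:{ intros i _. rewrite Rmult_plus_distr_r. f_equal. rewrite Rmult_assoc. f_equal.
     rewrite <- (Rmult_comm (sin (kn N i))), <- sumR_scal. apply sumR_ext. intros; ring. }
 rewrite sumR_plus, sumR_scal, sumR_swap, sumR_scal, sum_sin_zero by lia.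
 rewrite (sumR_ext (fun l => sumR _ N) (fun l => kappa a (S l) * sumR (fun n => sin (kn N n * INR (S l)) * sin (kn N n)) N)).
 2:{ intros; rewrite <- sumR_scal; apply sumR_ext; intros; ring. }
 rewrite sumR_split, sumR_S, sumR_O, orth_1 by lia.
 rewrite (sumR_ext _ (fun _ => 0)). 2:{ intros i Hi. rewrite orth_l by lia. ring. }
 rewrite sumR_const, kappa_1. lra. Qed.

Definition dd l s := Rmin (INR (S l)) s - Rmin (INR l) s.

Lemma dd_bounds l s : 0 <= s -> 0 <= dd l s <= 1.
Proof. intros Hs. unfold dd, Rmin. rewrite S_INR. pose proof (pos_INR l).
 repeat destruct Rle_dec; lra. Qed.

Lemma dd_sq l s : (1 <= l)%nat -> 0 <= s -> dd l s <= Rmin 1 (s * s / (INR l * INR l)).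
Proof. intros Hl Hs. assert (H1 : 1 <= INR l) by (apply (le_INR 1); auto).
 unfold dd. rewrite S_INR. destruct (Rle_dec s (INR l)).
 - rewrite (Rmin_right (INR l + 1) s) by lra. rewrite Rmin_right by lra.
   apply Rmin_glb; [lra|]. replace (s - s) with 0 by ring. apply Rmult_le_pos; [nra|]. left; apply Rinv_0_lt_compat; nra.
 - apply Rnot_le_lt in n. assert (1 <= s * s / (INR l * INR l)).
   { apply (Rmult_le_reg_r (INR l * INR l)); [apply Rmult_lt_0_compat; lra|]. unfold Rdiv. rewrite Rmult_assoc, Rinv_l by (apply Rgt_not_eq, Rmult_lt_0_compat; lra). rewrite Rmult_1_l, Rmult_1_r. apply Rmult_le_compat; lra. }
   rewrite (Rmin_left (INR l) s) by lra. pose proof (Rmin_l (INR l + 1) s).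
   rewrite (Rmin_left 1) by lra. lra. Qed.

Lemma kappa_pos a l : 0 < kappa a l.
Proof. unfold kappa, Rpower. apply exp_pos. Qed.

Lemma ln_ge0 l : (1 <= l)%nat -> 0 <= ln (INR l).
Proof. intros H. destruct (Nat.eq_dec l 1). subst; simpl; rewrite ln_1; lra.
 left. rewrite <- ln_1. apply ln_increasing; [lra|]. apply (lt_INR 1); lia. Qed.

Lemma kappa_le1 a l : 0 <= a -> (1 <= l)%nat -> kappa a l <= 1.
Proof. intros Ha Hl. unfold kappa, Rpower. rewrite <- exp_0. pose proof (ln_ge0 l Hl).
 destruct (Req_dec (- a * ln (INR l)) 0) as [E|E]. rewrite E; lra.
 left; apply exp_increasing. nra. Qed.

Lemma kappa_key a l : 0 < a -> (1 <= l)%nat ->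
  kappa a (S l) / INR l <= 2 / a * (kappa a l - kappa a (S l)).
Proof. intros Ha Hl. assert (H1 : 1 <= INR l) by (apply (le_INR 1); auto).
 unfold kappa, Rpower. rewrite S_INR.
 set (A := exp (- a * ln (INR l + 1))).
 assert (HA : 0 < A) by apply exp_pos.
 assert (E : exp (- a * ln (INR l)) = A * exp (a * (ln (INR l + 1) - ln (INR l)))).
 { unfold A. rewrite <- exp_plus. f_equal. ring. }
 assert (Hln : 1 / (INR l + 1) <= ln (INR l + 1) - ln (INR l)).
 { pose proof (exp_ineq1_le (ln (INR l / (INR l + 1)))). rewrite exp_ln in H by (apply Rdiv_lt_0_compat; lra).
   unfold Rdiv in H. rewrite ln_mult, ln_Rinv in H by (try apply Rinv_0_lt_compat; lra).
   assert (INR l * / (INR l + 1) = 1 - 1 / (INR l + 1)) by (field; lra). lra. }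
 pose proof (exp_ineq1_le (a * (ln (INR l + 1) - ln (INR l)))).
 rewrite E. 
 assert (A * (a / (INR l + 1)) <= A * exp (a * (ln (INR l + 1) - ln (INR l))) - A).
 { assert (a / (INR l + 1) <= a * (ln (INR l + 1) - ln (INR l))).
   { unfold Rdiv. replace (a * / (INR l + 1)) with (a * (1 / (INR l + 1))) by (field; lra).
     apply Rmult_le_compat_l; lra. } nra. }
 assert (A / INR l <= 2 * (A / (INR l + 1))).
 { unfold Rdiv. apply (Rmult_le_reg_r (INR l * (INR l + 1))); [nra|].
   replace (A * / INR l * (INR l * (INR l + 1))) with (A * (INR l + 1)) by (field; lra).
   replace (2 * (A * / (INR l + 1)) * (INR l * (INR l + 1))) with (2 * A * INR l) by (field; lra). nra. }
 apply Rle_trans with (2 * (A / (INR l + 1))); auto.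
 apply (Rmult_le_reg_l (a / 2)). apply Rdiv_lt_0_compat; lra.
 replace (a / 2 * (2 / a * (A * exp (a * (ln (INR l + 1) - ln (INR l))) - A)))
   with (A * exp (a * (ln (INR l + 1) - ln (INR l))) - A) by (field; lra).
 replace (a / 2 * (2 * (A / (INR l + 1)))) with (A * (a / (INR l + 1))) by (field; lra). lra. Qed.

Lemma kappa_decr a l : 0 < a -> (1 <= l)%nat -> kappa a (S l) <= kappa a l.
Proof. intros Ha Hl. pose proof (kappa_key a l Ha Hl). pose proof (kappa_pos a (S l)).
 assert (1 <= INR l) by (apply (le_INR 1); auto).
 assert (0 <= kappa a (S l) / INR l) by (unfold Rdiv; apply Rmult_le_pos; [lra|left; apply Rinv_0_lt_compat; lra]).
 assert (0 < 2 / a) by (apply Rdiv_lt_0_compat; lra). nra. Qed.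

Lemma fN_pt a M k : 0 < a -> (2 <= M)%nat -> sin (k/2) <> 0 ->
  Rabs (fN a (2 * M) k) <= 2 * sumR (fun l => kappa a (S l) * dd l (/ Rabs (sin (k/2)))) (M - 1) + 1.
Proof. intros Ha HM Hs. unfold fN. rewrite div2M.
 set (s := / Rabs (sin (k/2))). set (L := (M - 1)%nat).
 assert (Hs0 : 0 < s) by (apply Rinv_0_lt_compat, Rabs_pos_lt; auto).
 set (m := fun l => Rmin (INR l) s).
 assert (Hm0 : m O = 0) by (unfold m; simpl; apply Rmin_left; lra).
 assert (HU : forall l, Rabs (Ssin k l) <= m l).
 { intros l. apply Rmin_glb. apply Ssin_le_l. apply Ssin_le_s; auto. }
 assert (HU0 : Ssin k 0 = 0) by reflexivity.
 assert (E1 : sumR (fun j => kappa a (S j) * sin (k * INR (S j))) L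
   = sumR (fun l => kappa a (S l) * (Ssin k (S l) - Ssin k l)) L).
 { apply sumR_ext. intros. unfold Ssin. rewrite sumR_S. f_equal. ring. }
 assert (E2 : sumR (fun l => kappa a (S l) * dd l s) L
   = sumR (fun l => kappa a (S l) * (m (S l) - m l)) L) by reflexivity.
 rewrite E1, abel by auto. rewrite E2, abel by auto.
 assert (Hb : Rabs (kappa a L * Ssin k L + sumR (fun l => (kappa a l - kappa a (S l)) * Ssin k l) L)
    <= kappa a L * m L + sumR (fun l => (kappa a l - kappa a (S l)) * m l) L).
 { eapply Rle_trans; [apply Rabs_triang|]. apply Rplus_le_compat.
   - rewrite Rabs_mult, Rabs_right by (left; apply kappa_pos).
     apply Rmult_le_compat_l; [left; apply kappa_pos| apply HU].
   - eapply Rle_trans; [apply sumR_abs|]. apply sumR_le. intros l _.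
     destruct l as [|l].
     + rewrite HU0, Hm0. rewrite !Rmult_0_r, Rabs_R0. lra.
     + rewrite Rabs_mult. pose proof (kappa_decr a (S l) Ha ltac:(lia)).
       rewrite Rabs_right by lra. apply Rmult_le_compat_l; [lra|apply HU]. }
 assert (Hk : kappa a M <= 1) by (apply kappa_le1; lia || lra).
 pose proof (kappa_pos a M).
 eapply Rle_trans; [apply Rabs_triang|]. rewrite Rabs_mult, (Rabs_right 2) by lra.
 rewrite (Rabs_right (kappa a M)) by lra. lra. Qed.

Definition FF x t := if Rle_dec t x then x - t/2 else x*x/(2*t).

Lemma FF_key x m : 0 < x -> 1 <= m -> Rmin 1 (x*x/(m*m)) <= FF x (m-2) - FF x m.
Proof. intros Hx Hm. unfold FF.
 destruct (Rle_dec (m-2) x) as [H1|H1]; destruct (Rle_dec m x) as [H2|H2].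
 - pose proof (Rmin_l 1 (x*x/(m*m))). lra.
 - apply Rnot_le_lt in H2. eapply Rle_trans; [apply Rmin_r|].
   apply (Rmult_le_reg_r (2 * m * m)); [nra|].
   replace (x * x / (m * m) * (2 * m * m)) with (2 * x * x) by (field; lra).
   replace ((x - (m - 2) / 2 - x * x / (2 * m)) * (2 * m * m)) with (2*m*m*x - m*m*(m-2) - m*x*x) by (field; lra).
   assert (0 <= (m - x) * ((m + 2) * x - m * (m - 2))).
   { apply Rmult_le_pos; [lra|]. destruct (Rle_dec m 2); nra. }
   nra.
 - lra.
 - apply Rnot_le_lt in H1. eapply Rle_trans; [apply Rmin_r|].
   assert (0 < m - 2) by lra.
   apply (Rmult_le_reg_r (2 * m * m * (m - 2))); [repeat apply Rmult_lt_0_compat; lra|].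
   replace (x * x / (m * m) * (2 * m * m * (m - 2))) with (2 * x * x * (m - 2)) by (field; lra).
   replace ((x * x / (2 * (m - 2)) - x * x / (2 * m)) * (2 * m * m * (m - 2))) with (2 * x * x * m) by (field; lra).
   apply Rmult_le_compat_l; [nra|lra]. Qed.

Lemma FF_nonneg x t : 0 < x -> 0 <= t -> 0 <= FF x t.
Proof. intros Hx Ht. unfold FF. destruct Rle_dec. lra.
 apply Rnot_le_lt in n. unfold Rdiv. apply Rmult_le_pos; [nra|]. left; apply Rinv_0_lt_compat; lra. Qed.

Lemma FF_m1 x : 0 < x -> FF x (-1) = x + 1/2.
Proof. intros Hx. unfold FF. destruct Rle_dec; lra. Qed.

Lemma half1 x M : 0 < x ->
  sumR (fun n => Rmin 1 (x * x / ((2 * INR n + 1) * (2 * INR n + 1)))) M <= x + 1/2.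
Proof. intros Hx.
 eapply Rle_trans. apply (sumR_tele_le _ (fun n => - FF x (2 * INR n - 1))).
 - intros i _. rewrite S_INR.
   replace (- FF x (2 * (INR i + 1) - 1) - - FF x (2 * INR i - 1))
     with (FF x ((2 * INR i + 1) - 2) - FF x (2 * INR i + 1)).
   apply FF_key; auto. pose proof (pos_INR i); lra.
   replace (2 * (INR i + 1) - 1) with (2 * INR i + 1) by ring.
   replace (2 * INR i - 1) with (2 * INR i + 1 - 2) by ring. ring.
 - simpl INR. replace (2 * 0 - 1) with (-1) by ring. rewrite FF_m1 by auto.
   destruct M. simpl INR. replace (2 * 0 - 1) with (-1) by ring. rewrite FF_m1 by auto. lra. pose proof (FF_nonneg x (2 * INR (S M) - 1) Hx).
   rewrite S_INR in *. pose proof (pos_INR M). lra. Qed.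

Lemma half2 x N M : 0 < x -> (1 <= M)%nat -> INR N = 2 * INR M ->
  sumR (fun i => Rmin 1 (x * x / ((INR N - 2 * INR i - 1) * (INR N - 2 * INR i - 1)))) M <= x + 1/2.
Proof. intros Hx HM HN.
 eapply Rle_trans. apply (sumR_tele_le _ (fun i => FF x (INR N - 2 * INR i - 1))).
 - intros i Hi. rewrite S_INR.
   replace (INR N - 2 * (INR i + 1) - 1) with ((INR N - 2 * INR i - 1) - 2) by ring.
   apply FF_key; auto. assert (INR (S i) <= INR M) by (apply le_INR; lia). rewrite S_INR in H. lra.
 - simpl INR. replace (INR N - 2 * INR M - 1) with (-1) by lra. rewrite FF_m1 by auto.
   assert (1 <= INR M) by (apply (le_INR 1); auto).
   pose proof (FF_nonneg x (INR N - 2 * 0 - 1) Hx ltac:(lra)). lra. Qed.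

Lemma s_gen c N : 0 < c -> c <= INR N ->
  / Rabs (sin (c * PI / (2 * INR N))) <= 2 * INR N / c.
Proof. intros Hc HcN. pose proof PI_RGT_0. pose proof PI2_3_2.
 assert (HN : 0 < INR N) by lra.
 set (y := c * PI / (2 * INR N)).
 assert (Hy0 : 0 < y) by (unfold y; apply Rdiv_lt_0_compat; nra).
 assert (Hy1 : y <= PI / 2).
 { unfold y. apply (Rmult_le_reg_r (2 * INR N)); [lra|].
   replace (c * PI / (2 * INR N) * (2 * INR N)) with (c * PI) by (field; lra).
   replace (PI / 2 * (2 * INR N)) with (INR N * PI) by (field; lra). nra. }
 pose proof (sin_lb3 y Hy0 Hy1).
 assert (Hs : c / (2 * INR N) <= sin y).
 { apply Rle_trans with (y / 3); auto. unfold y.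
   apply (Rmult_le_reg_r (2 * INR N)); [lra|].
   replace (c / (2 * INR N) * (2 * INR N)) with c by (field; lra).
   replace (c * PI / (2 * INR N) / 3 * (2 * INR N)) with (c * PI / 3) by (field; lra). nra. }
 assert (0 < c / (2 * INR N)) by (apply Rdiv_lt_0_compat; lra).
 rewrite Rabs_right by lra.
 replace (2 * INR N / c) with (/ (c / (2 * INR N))) by (field; lra).
 apply Rinv_le_contravar; lra. Qed.

Lemma s_first N M n : INR N = 2 * INR M -> (n < M)%nat ->
  / Rabs (sin (kn N n / 2)) <= 2 * INR N / (2 * INR n + 1).
Proof. intros HN Hn. assert (INR (S n) <= INR M) by (apply le_INR; lia). rewrite S_INR in H.
 pose proof (pos_INR n).
 replace (kn N n / 2) with ((2 * INR n + 1) * PI / (2 * INR N)) by (unfold kn; field; lra).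
 apply s_gen; lra. Qed.

Lemma s_second N M i : INR N = 2 * INR M -> (i < M)%nat ->
  / Rabs (sin (kn N (M + i) / 2)) <= 2 * INR N / (INR N - 2 * INR i - 1).
Proof. intros HN Hi. assert (INR (S i) <= INR M) by (apply le_INR; lia). rewrite S_INR in H.
 pose proof (pos_INR i).
 rewrite <- sin_PI_x.
 replace (PI - kn N (M + i) / 2) with ((INR N - 2 * INR i - 1) * PI / (2 * INR N))
   by (unfold kn; rewrite plus_INR, HN; field; lra).
 apply s_gen; lra. Qed.

Lemma dd_le l s B m : (1 <= l)%nat -> 0 <= s -> 0 < m -> 0 < B -> s <= B / m ->
  dd l s <= Rmin 1 ((B / INR l) * (B / INR l) / (m * m)).
Proof. intros Hl Hs Hm HB Hsb. assert (H1 : 1 <= INR l) by (apply (le_INR 1); auto).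
 eapply Rle_trans; [apply dd_sq; auto|]. apply Rle_min_compat_l.
 replace (B / INR l * (B / INR l) / (m * m)) with ((B/m) * (B/m) / (INR l * INR l)) by (field; lra).
 unfold Rdiv at 1 3. apply Rmult_le_compat_r. left; apply Rinv_0_lt_compat; nra.
 apply Rmult_le_compat; lra. Qed.

Definition sn N n := / Rabs (sin (kn N n / 2)).

Lemma sn_pos N n : (n < N)%nat -> 0 < sn N n.
Proof. intros H. unfold sn. apply Rinv_0_lt_compat, Rabs_pos_lt.
 apply Rgt_not_eq, sin_gt_0.
 - pose proof (kn_pos N n ltac:(lia)). lra.
 - unfold kn. assert (INR (S n) <= INR N) by (apply le_INR; lia). rewrite S_INR in H0.
   assert (0 < INR N) by (apply lt_0_INR; lia). pose proof PI_RGT_0. pose proof (pos_INR n).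
   apply (Rmult_lt_reg_r (2 * INR N)); [lra|].
   replace ((2 * INR n + 1) * PI / INR N / 2 * (2 * INR N)) with ((2 * INR n + 1) * PI) by (field; lra).
   nra. Qed.

Lemma sum_dd_l M l : (1 <= M)%nat -> (1 <= l)%nat ->
  sumR (fun n => dd l (sn (M + M) n)) (M + M) <= 4 * INR (M + M) / INR l + 1.
Proof. intros HM Hl. set (N := (M + M)%nat).
 assert (HN : INR N = 2 * INR M) by (unfold N; rewrite plus_INR; ring).
 assert (H1 : 1 <= INR M) by (apply (le_INR 1); auto).
 assert (Hl1 : 1 <= INR l) by (apply (le_INR 1); auto).
 set (x := 2 * INR N / INR l).
 assert (Hx : 0 < x) by (unfold x; apply Rdiv_lt_0_compat; lra).
 unfold N at 2. rewrite sumR_split.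
 assert (A1 : sumR (fun n => dd l (sn N n)) M <= x + 1/2).
 { eapply Rle_trans; [|apply (half1 x M Hx)]. apply sumR_le. intros i Hi.
   pose proof (pos_INR i).
   unfold x. apply dd_le; auto. left; apply sn_pos; unfold N; lia. lra. lra.
   apply (s_first N M i HN Hi). }
 assert (A2 : sumR (fun i => dd l (sn N (M + i))) M <= x + 1/2).
 { eapply Rle_trans; [|apply (half2 x N M Hx HM HN)]. apply sumR_le. intros i Hi.
   assert (INR (S i) <= INR M) by (apply le_INR; lia). rewrite S_INR in H.
   unfold x. apply dd_le; auto. left; apply sn_pos; unfold N; lia. lra. lra.
   apply (s_second N M i HN Hi). }
 fold N. unfold x in *. replace (4 * INR N / INR l) with (2 * (2 * INR N / INR l)) by (field; lra). lra. Qed.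

Lemma sum_dd_0 N : sumR (fun n => dd 0 (sn N n)) N <= INR N.
Proof. rewrite <- (Rmult_1_r (INR N)), <- sumR_const. apply sumR_le. intros i Hi.
 apply dd_bounds. left; apply sn_pos; auto. Qed.

Lemma sin_kn_nz N n : (n < N)%nat -> sin (kn N n / 2) <> 0.
Proof. intros H. pose proof (sn_pos N n H). unfold sn in H0. intro E. rewrite E, Rabs_R0, Rinv_0 in H0. lra. Qed.

Lemma gamma_ub a M : 0 < a -> (2 <= M)%nat -> gammaA a (2 * M) <= (5 + 16 / a) * INR (2 * M).
Proof. intros Ha HM.
 assert (EN : (2 * M = M + M)%nat) by lia.
 set (N := (2 * M)%nat) in *.
 assert (HNp : 0 < INR N) by (apply lt_0_INR; lia).
 unfold gammaA.
 eapply Rle_trans.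
 { apply sumR_le. intros n Hn. apply (fN_pt a M (kn N n) Ha HM). apply sin_kn_nz; auto. }
 fold N. fold (sn N). 
 rewrite sumR_plus, sumR_const, (sumR_ext _ (fun n => 2 * sumR (fun l => kappa a (S l) * dd l (sn N n)) (M - 1))) by (intros; reflexivity).
 rewrite sumR_scal, sumR_swap.
 rewrite (sumR_ext (fun l => sumR _ N) (fun l => kappa a (S l) * sumR (fun n => dd l (sn N n)) N)).
 2:{ intros; rewrite <- sumR_scal; apply sumR_ext; intros; ring. }
 destruct M as [|[|L']]; try lia. replace (S (S L') - 1)%nat with (1 + L')%nat by lia.
 rewrite sumR_split, sumR_S, sumR_O, kappa_1.
 pose proof (sum_dd_0 N).
 assert (Hs : sumR (fun i => kappa a (S (1 + i)) * sumR (fun n => dd (1 + i) (sn N n)) N) L'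
            <= INR L' + 8 * INR N / a).
 { eapply Rle_trans.
   apply (sumR_tele_le _ (fun i => INR i - 8 * INR N / a * kappa a (1 + i))).
   - intros i Hi. rewrite S_INR. simpl plus.
     pose proof (sum_dd_l (S (S L')) (S i) ltac:(lia) ltac:(lia)).
     rewrite <- EN in H0. fold N in H0.
     pose proof (kappa_key a (S i) Ha ltac:(lia)).
     pose proof (kappa_pos a (S (S i))).
     assert (kappa a (S (S i)) <= 1) by (apply kappa_le1; lia || lra).
     assert (1 <= INR (S i)) by (apply (le_INR 1); lia).
     apply Rle_trans with (kappa a (S (S i)) * (4 * INR N / INR (S i) + 1)).
     apply Rmult_le_compat_l; lra.
     replace (kappa a (S (S i)) * (4 * INR N / INR (S i) + 1))
       with (4 * INR N * (kappa a (S (S i)) / INR (S i)) + kappa a (S (S i))) by (field; lra).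
     assert (4 * INR N * (kappa a (S (S i)) / INR (S i)) <= 4 * INR N * (2 / a * (kappa a (S i) - kappa a (S (S i))))).
     { apply Rmult_le_compat_l; lra. }
     replace (4 * INR N * (2 / a * (kappa a (S i) - kappa a (S (S i)))))
       with (8 * INR N / a * kappa a (S i) - 8 * INR N / a * kappa a (S (S i))) in H5 by (field; lra).
     lra.
   - rewrite INR_0. replace (1+0)%nat with 1%nat by lia. rewrite kappa_1. pose proof (kappa_pos a (1 + L')).
     assert (0 < 8 * INR N / a) by (apply Rdiv_lt_0_compat; lra). nra. }
 assert (INR L' <= INR N) by (apply le_INR; unfold N; lia).
 assert (0 < 16 / a) by (apply Rdiv_lt_0_compat; lra).
 replace (8 * INR N / a) with (16 / a * INR N / 2) in Hs by (field; lra).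
 nra. Qed.

Lemma kappa_0 l : kappa 0 l = 1.
Proof. unfold kappa, Rpower. replace (- 0 * ln (INR l)) with 0 by ring. apply exp_0. Qed.

Lemma ln_le_x x : 0 < x -> ln (1 + x) <= x.
Proof. intros Hx. pose proof (exp_ineq1_le x). rewrite <- (ln_exp x) at 2.
 destruct (Req_dec (1 + x) (exp x)) as [E|E]. rewrite E; lra.
 left. apply ln_increasing; lra. Qed.

Lemma harm K : ln (INR K + 1) <= sumR (fun n => / (INR n + 1)) K.
Proof. replace (ln (INR K + 1)) with ((fun n => ln (INR n + 1)) K - (fun n => ln (INR n + 1)) O)
   by (simpl; rewrite Rplus_0_l, ln_1; ring).
 rewrite <- (sumR_tele (fun n => ln (INR n + 1))). apply sumR_le. intros i _. rewrite S_INR. pose proof (pos_INR i).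
 replace (INR i + 1 + 1) with ((INR i + 1) * (1 + / (INR i + 1))) by (field; lra).
 assert (0 < / (INR i + 1)) by (apply Rinv_0_lt_compat; lra).
 rewrite ln_mult by lra.
 pose proof (ln_le_x (/ (INR i + 1)) ltac:(apply Rinv_0_lt_compat; lra)). lra. Qed.

Lemma sin_le_y y : 0 <= y -> y <= 1 -> sin y <= y.
Proof. intros H1 H2. pose proof PI2_3_2. destruct (sin_bound y 0) as [_ Hb]; try lra.
 replace (sin_approx y (2*(0+1))) with (y - y*y*y/6 + y*y*y*y*y/120) in Hb
   by (unfold sin_approx, sin_term; simpl; unfold Rdiv; simpl; field).
 assert (y*y <= 1) by nra. assert (0 <= y*y*y) by (apply Rmult_le_pos; nra). nra. Qed.

Lemma cos_ge y : 0 <= y -> y <= 1 -> 1 - y*y/2 <= cos y.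
Proof. intros H1 H2. pose proof PI2_3_2. destruct (cos_bound y 0) as [Hb _]; try lra.
 replace (cos_approx y (2*0+1)) with (1 - y*y/2) in Hb
   by (unfold cos_approx, cos_term; simpl; field). auto. Qed.

Lemma f0_lb K n : (1 <= K)%nat -> (n < K)%nat ->
  3 * INR (8 * K) / (32 * (INR n + 1)) - 1 <= Rabs (fN 0 (8 * K) (kn (8 * K) n)).
Proof. intros HK Hn. set (N := (8 * K)%nat). set (M := (4 * K)%nat).
 assert (HNM : N = (2 * M)%nat) by (unfold N, M; lia).
 assert (HNr : INR N = 8 * INR K) by (unfold N; rewrite mult_INR; simpl; ring).
 assert (HK1 : 1 <= INR K) by (apply (le_INR 1); auto).
 assert (Hn1 : INR n + 1 <= INR K) by (rewrite <- S_INR; apply le_INR; lia).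
 pose proof (pos_INR n). pose proof PI_RGT_0. pose proof PI_4. pose proof PI2_3_2.
 unfold fN. assert (HN2 : (N / 2 = M)%nat) by (rewrite HNM; apply div2M). rewrite HN2.
 rewrite (sumR_ext _ (fun j => sin (kn N n * INR (S j)))) by (intros; rewrite kappa_0; ring).
 rewrite kappa_0. fold (Ssin (kn N n) (M - 1)).
 set (k := kn N n). set (y := k / 2).
 assert (Hy : y = (2 * INR n + 1) * PI / (2 * INR N)) by (unfold y, k, kn; field; lra).
 assert (Hy0 : 0 < y) by (rewrite Hy; apply Rdiv_lt_0_compat; nra).
 assert (Hy1 : y <= (INR n + 1) / (2 * INR K)).
 { rewrite Hy, HNr. apply (Rmult_le_reg_r (16 * INR K)); [lra|].
   replace ((2 * INR n + 1) * PI / (2 * (8 * INR K)) * (16 * INR K)) with ((2 * INR n + 1) * PI) by (field; lra).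
   replace ((INR n + 1) / (2 * INR K) * (16 * INR K)) with (8 * (INR n + 1)) by (field; lra). nra. }
 assert (Hyh : y <= 1/2).
 { apply Rle_trans with ((INR n + 1) / (2 * INR K)); auto.
   apply (Rmult_le_reg_r (2 * INR K)); [lra|].
   replace ((INR n + 1) / (2 * INR K) * (2 * INR K)) with (INR n + 1) by (field; lra). lra. }
 pose proof (sin_le_y y ltac:(lra) ltac:(lra)).
 pose proof (cos_ge y ltac:(lra) ltac:(lra)).
 assert (Hsy : 0 < sin y) by (apply sin_gt_0; lra).
 pose proof (Ssin_closed k (M - 1)). fold y in H5.
 assert (HMk : cos (INR M * k) = 0).
 { apply cos_eq_0_1. exists (Z.of_nat n). rewrite <- INR_IZR_INZ. unfold k, kn.
   rewrite HNM, mult_INR. simpl INR. field. assert (0 < INR M) by (apply lt_0_INR; unfold M; lia). lra. }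
 replace ((INR (M - 1) + 1 / 2) * k) with (INR M * k - y) in H5
   by (rewrite minus_INR by (unfold M; lia); unfold y; simpl INR; field).
 rewrite cos_minus, HMk in H5.
 pose proof (SIN_bound (INR M * k)).
 set (S := Ssin k (M - 1)) in *.
 assert (HS : 3 / 8 <= 2 * sin y * Rabs S).
 { assert (Rabs (sin (INR M * k) * sin y) <= sin y).
   { rewrite Rabs_mult, (Rabs_right (sin y)) by lra.
     assert (Rabs (sin (INR M * k)) <= 1) by (apply Rabs_le; lra). nra. }
   assert (2 * sin y * S = cos y - sin (INR M * k) * sin y) by lra.
   assert (3/8 <= 2 * sin y * S).
   { pose proof (Rle_abs (sin (INR M * k) * sin y)). assert (y*y <= 1/4) by nra. lra. }
   pose proof (Rle_abs S). nra. }
 assert (HS2 : 3 / (8 * y) <= 2 * Rabs S).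
 { apply (Rmult_le_reg_l y); auto. replace (y * (3 / (8 * y))) with (3/8) by (field; lra).
   pose proof (Rabs_pos S). nra. }
 assert (Hyb : 3 * INR N / (32 * (INR n + 1)) <= 3 / (8 * y)).
 { rewrite HNr. apply (Rmult_le_reg_r (32 * (INR n + 1) * y)); [nra|].
   replace (3 * (8 * INR K) / (32 * (INR n + 1)) * (32 * (INR n + 1) * y)) with (24 * INR K * y) by (field; lra).
   replace (3 / (8 * y) * (32 * (INR n + 1) * y)) with (12 * (INR n + 1)) by (field; lra).
   assert (y * (2 * INR K) <= INR n + 1).
   { apply (Rmult_le_compat_r (2 * INR K)) in Hy1; [|lra].
     replace ((INR n + 1) / (2 * INR K) * (2 * INR K)) with (INR n + 1) in Hy1 by (field; lra). lra. }
   nra. }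
 pose proof (Rabs_triang_inv (2 * S) (-1)) as HT. rewrite (Rabs_left (-1)), Rabs_mult, (Rabs_right 2) in HT by lra.
 replace (2 * S - -1) with (2 * S + 1) in HT by ring. lra. Qed.

Theorem mainTheorem7 :
  (forall alpha : R, 0 < alpha ->
     exists (c C : R) (N0 : nat),
       0 < c /\ c <= C /\
       forall N : nat, Nat.Even N -> (4 <= N)%nat -> (N0 <= N)%nat ->
         (c * INR N <= gammaA alpha N <= C * INR N) /\
         (forall T : R, 0 < T ->
            (c / 2) ^ 2 * (T ^ 2 * INR N ^ 2) <= I0 alpha N T <=
            (C / 2) ^ 2 * (T ^ 2 * INR N ^ 2)))
  /\
  (forall M : R, exists N : nat,
      Nat.Even N /\ (4 <= N)%nat /\ M * INR N < gammaA 0 N).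
Proof. split.
 - intros a Ha. assert (0 < 16 / a) by (apply Rdiv_lt_0_compat; lra).
   exists 1, (5 + 16 / a), 0%nat. split; [lra|]. split; [lra|].
   intros N [M HM] H4 _. subst N.
   pose proof (gamma_lb a M ltac:(lia)). pose proof (gamma_ub a M Ha ltac:(lia)).
   assert (0 <= INR (2 * M)) by apply pos_INR.
   assert (Hg : 1 * INR (2 * M) <= gammaA a (2 * M) <= (5 + 16 / a) * INR (2 * M)) by lra.
   split; auto. intros T HT. unfold I0.
   set (g := gammaA a (2 * M)) in *. set (n := INR (2 * M)) in *. set (C := 5 + 16 / a) in *.
   assert (0 < T ^ 2) by (apply pow_lt; lra).
   assert (n ^ 2 <= g ^ 2) by (simpl; nra).
   assert (g ^ 2 <= (C * n) ^ 2) by (simpl; nra).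
   split.
   + replace ((1 / 2) ^ 2 * (T ^ 2 * n ^ 2)) with (n ^ 2 / 4 * T ^ 2) by field.
     replace ((g / 2) ^ 2 * T ^ 2) with (g ^ 2 / 4 * T ^ 2) by field. nra.
   + replace ((C / 2) ^ 2 * (T ^ 2 * n ^ 2)) with ((C * n) ^ 2 / 4 * T ^ 2) by field.
     replace ((g / 2) ^ 2 * T ^ 2) with (g ^ 2 / 4 * T ^ 2) by field. nra.
 - intros B. set (E := exp (32 / 3 * (Rabs B + 1))).
   destruct (INR_unbounded E) as [K0 HK0]. set (K := S K0).
   exists (8 * K)%nat. split; [exists (4 * K)%nat; lia|]. split; [unfold K; lia|].
   set (N := (8 * K)%nat).
   assert (HNr : INR N = 8 * INR K) by (unfold N; rewrite mult_INR; simpl; ring).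
   assert (HK1 : 1 <= INR K) by (apply (le_INR 1); unfold K; lia).
   assert (Hln : 32 / 3 * (Rabs B + 1) < ln (INR K + 1)).
   { rewrite <- (ln_exp (32 / 3 * (Rabs B + 1))). fold E. apply ln_increasing. apply exp_pos.
     unfold K. rewrite S_INR. lra. }
   pose proof (harm K).
   assert (Hsum : sumR (fun n => 3 * INR N / (32 * (INR n + 1)) - 1) K <= gammaA 0 N).
   { apply Rle_trans with (sumR (fun n => Rabs (fN 0 N (kn N n))) K).
     apply sumR_le. intros i Hi. apply f0_lb; unfold K in *; lia.
     apply sumR_prefix. unfold N; lia. intros; apply Rabs_pos. }
   rewrite (sumR_ext _ (fun n => (3 * INR N / 32) * / (INR n + 1) + (-1))) in Hsum.
   2:{ intros i _. pose proof (pos_INR i). field. lra. }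
   rewrite sumR_plus, sumR_scal, sumR_const in Hsum.
   assert (0 < 3 * INR N / 32) by lra.
   assert (HH : 3 * INR N / 32 * (32 / 3 * (Rabs B + 1)) <= 3 * INR N / 32 * sumR (fun n => / (INR n + 1)) K).
   { apply Rmult_le_compat_l; lra. }
   replace (3 * INR N / 32 * (32 / 3 * (Rabs B + 1))) with (INR N * (Rabs B + 1)) in HH by field.
   pose proof (Rle_abs B). nra. Qed.
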